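(* Let $a, b$ be natural numbers with $a, b > 0$, and let $d > 1$ be a natural number. (1) $a$ and $b$ are relatively prime if and only if there are $r, s \in \mathbb{N}_0$ such that $(a-1)(b-1) = ra + sb$. (2) Suppose $a$ and $b$ are divisible by $d$. Then $\gcd(a,b) = d$ if and only if there are $r, s \in \mathbb{N}_0$ such that $d(a/d - 1)(b/d - 1) = ra + sb$.
   Context: $\mathbb{N}_0$ denotes the set of natural numbers including $0$. *)

(* Defs.v *)
From mathcomp Require Import all_boot.

(* Main.v *)
Require Import Defs.
From mathcomp Require Import all_boot.
From mathcomp Require Import zify.

Lemma part1 (a b : nat) (ha : 0 < a) (hb : 0 < b) :
  coprime a b <-> exists r s : nat, (a - 1) * (b - 1) = r * a + s * b.
Proof.
split.
- move=> cop.
  have [u ua] := Bezoutl b ha.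
  move: cop; rewrite /coprime => /eqP ->.
  case/dvdnP=> k hk.
  have k1 : 0 < k by case: k hk => //= ; lia.
  exists (k - 1), (a - 1 - u); nia.
- case=> r [s] h.
  rewrite /coprime; apply/eqP.
  set g := gcdn a b.
  have ga : g %| a by apply: dvdn_gcdl.
  have gb : g %| b by apply: dvdn_gcdr.
  have gN : g %| (a - 1) * (b - 1).
    by rewrite h dvdn_add // dvdn_mull.
  have e : (a - 1) * (b - 1) + a + b = a * b + 1 by nia.
  have g1 : g %| a * b + 1.
    by rewrite -e dvdn_add // dvdn_add.
  have : g %| 1 by rewrite -(dvdn_addr 1 (dvdn_mulr b ga)).
  by rewrite dvdn1 => /eqP.
Qed.

Theorem theorem4p11 (a b d : nat) (ha : 0 < a) (hb : 0 < b) (hd : 1 < d) :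
  (coprime a b <-> exists r s : nat, (a - 1) * (b - 1) = r * a + s * b) /\
  (d %| a -> d %| b -> (
     (gcdn a b = d <->
      exists r s : nat, d * (a %/ d - 1) * (b %/ d - 1) = r * a + s * b))).
Proof.
split; first exact: part1.
move=> da db.
have d0 : 0 < d by lia.
move: ha hb; rewrite -(divnK da) -(divnK db).
set a' := a %/ d; set b' := b %/ d.
rewrite !mulnK //.
move=> ha hb.
have ha' : 0 < a' by move: ha; rewrite muln_gt0 => /andP[].
have hb' : 0 < b' by move: hb; rewrite muln_gt0 => /andP[].
rewrite -muln_gcdl.
have -> : (gcdn a' b' * d = d) <-> coprime a' b'.
  rewrite /coprime; split.
  - move=> h; apply/eqP; move: h; rewrite -{2}(mul1n d) => /eqP; rewrite eqn_pmul2r // => /eqP -> //.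
  - by move=> /eqP ->; rewrite mul1n.
rewrite part1 //.
split; case=> r [s] h; exists r, s.
- rewrite -mulnA h mulnDr !mulnA.
  by rewrite [d * r]mulnC [d * s]mulnC -!mulnA [d * a']mulnC [d * b']mulnC.
- apply/eqP; rewrite -(eqn_pmul2l d0) mulnA h mulnDr !mulnA.
  by rewrite [d * r]mulnC [d * s]mulnC -!mulnA [a' * d]mulnC [b' * d]mulnC.
Qed.
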